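(* For every $n\ge1$ and every boolean function $f:\{-1,1\}^n\to\{-1,1\}$, $$\mathrm{Ent}(f)\le \frac{1}{\ln 2}\Big(3I(f)+\sum_{k=1}^n I_k(f)\ln\frac{4}{I_k(f)}\Big),$$ with the convention $I_k(f)\ln\frac{4}{I_k(f)}=0$ when $I_k(f)=0$.
   Context: Let $x$ be uniformly distributed on $\{-1,1\}^n$. For $k\in[n]$, $\mu_k$ flips the $k$-th coordinate. $I_k(f)=\mathbb{P}_x[f(x)\neq f(\mu_k(x))]$, $I(f)=\sum_k I_k(f)$. For $S\subseteq[n]$, $\hat f(S)=\mathbb{E}_x[f(x)\prod_{k\in S}x_k]$, and $\mathrm{Ent}(f)=\sum_{S\subseteq[n]}\hat f(S)^2\log_2\frac{1}{\hat f(S)^2}$ (terms with $\hat f(S)=0$ are $0$). $\ln$ is the natural logarithm. *)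

(* Defs.v *)
From HB Require Import structures.
From mathcomp Require Import all_boot all_order all_algebra.
From mathcomp Require Import all_classical all_reals.
From mathcomp Require Import exp.
Set Implicit Arguments. Unset Strict Implicit. Unset Printing Implicit Defensive.
Import Order.TTheory GRing.Theory Num.Theory.
Local Open Scope ring_scope.

(* Points of {-1,1}^n are encoded as finite functions 'I_n -> bool,
   with true <-> 1 and false <-> -1. *)
Definition cube (n : nat) := {ffun 'I_n -> bool}.

Definition sgnR (R : realType) (b : bool) : R := if b then 1 else -1.

Definition flip n (k : 'I_n) (x : cube n) : cube n :=
  [ffun i => if i == k then ~~ x i else x i].

Definition infl (R : realType) n (f : cube n -> bool) (k : 'I_n) : R :=
  #|[set x : cube n | f x != f (flip k x)]|%:R / (2 ^+ n).

Definition total_infl (R : realType) n (f : cube n -> bool) : R :=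
  \sum_(k < n) infl R f k.

Definition fourier (R : realType) n (f : cube n -> bool) (S : {set 'I_n}) : R :=
  (\sum_(x : cube n) sgnR R (f x) * \prod_(k in S) sgnR R (x k)) / (2 ^+ n).

Definition log2 (R : realType) (y : R) : R := ln y / ln 2.

Definition Ent (R : realType) n (f : cube n -> bool) : R :=
  \sum_(S : {set 'I_n})
     (if fourier R f S == 0 then 0
      else fourier R f S ^+ 2 * log2 (1 / fourier R f S ^+ 2)).

(* Main.v *)
Require Import Defs.
From HB Require Import structures.
From mathcomp Require Import all_boot all_order all_algebra.
From mathcomp Require Import all_classical all_reals.
From mathcomp Require Import exp.
From mathcomp Require Import ring lra.
Set Implicit Arguments. Unset Strict Implicit. Unset Printing Implicit Defensive.
Import Order.TTheory GRing.Theory Num.Theory.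
Local Open Scope ring_scope.

Definition chi (R : realType) n (S : {set 'I_n}) (x : cube n) : R :=
  \prod_(k in S) sgnR R (x k).

Definition fh (R : realType) n (g : cube n -> R) (S : {set 'I_n}) : R :=
  (\sum_(x : cube n) g x * chi R S x) / (2 ^+ n).

Lemma sgnR_mul1 (R : realType) a b :
  sgnR R a * sgnR R b + 1 = if a == b then 2 else 0.
Proof. by case: a; case: b; rewrite /sgnR /=; lra. Qed.

Lemma sum_chi (R : realType) n (x y : cube n) :
  \sum_(S : {set 'I_n}) chi R S x * chi R S y = if x == y then 2 ^+ n else 0.
Proof.
transitivity (\prod_(k < n) (sgnR R (x k) * sgnR R (y k) + 1)).
  rewrite bigA_distr; apply: eq_bigr => S _.
  rewrite /chi -big_split /= big_mkcond /=; apply: eq_bigr => i _.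
  by case: (i \in S).
case: eqP => [<-|/eqP neq].
  rewrite (eq_bigr (fun=> 2)) ?prodr_const ?card_ord //.
  by move=> i _; rewrite sgnR_mul1 eqxx.
case: (pickP (fun k => x k != y k)) => [k hk|h].
  by rewrite (bigD1 k) //= sgnR_mul1 (negbTE hk) mul0r.
case/eqP: neq; apply/ffunP => i; move: (h i) => /= /negbFE/eqP //.
Qed.

Lemma parseval (R : realType) n (g : cube n -> R) :
  \sum_(S : {set 'I_n}) fh g S ^+ 2 = (\sum_x g x ^+ 2) / 2 ^+ n.
Proof.
have h2 : (2 ^+ n : R) != 0 by rewrite expf_neq0 // pnatr_eq0.
transitivity (\sum_(S : {set 'I_n}) \sum_(x : cube n) \sum_(y : cube n)
    g x * g y * (chi R S x * chi R S y) / (2 ^+ n * 2 ^+ n)).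
  apply: eq_bigr => S _.
  rewrite /fh expr2 mulf_div big_distrlr mulr_suml; apply: eq_bigr => x _.
  rewrite mulr_suml; apply: eq_bigr => y _ /=; ring.
rewrite exchange_big; under eq_bigr do rewrite exchange_big.
transitivity (\sum_(x : cube n) \sum_(y : cube n)
    g x * g y * (if x == y then 2 ^+ n else 0) / (2 ^+ n * 2 ^+ n)).
  apply: eq_bigr => x _; apply: eq_bigr => y _.
  by rewrite -sum_chi -mulr_suml -mulr_sumr.
rewrite mulr_suml; apply: eq_bigr => x _.
rewrite (bigD1 x) //= big1 ?addr0; first by rewrite eqxx; field.
by move=> y /negbTE; rewrite eq_sym => ->; rewrite mulr0 mul0r.
Qed.

Lemma flipK n (k : 'I_n) : involutive (@flip n k).
Proof.
move=> x; apply/ffunP => i; rewrite !ffunE.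
by case: (i == k) => //; rewrite negbK.
Qed.

Lemma sgnR_neg (R : realType) b : sgnR R (~~ b) = - sgnR R b.
Proof. by case: b; rewrite /sgnR /= ?opprK. Qed.

Lemma chi_flip (R : realType) n (k : 'I_n) S (x : cube n) :
  chi R S (flip k x) = if k \in S then - chi R S x else chi R S x.
Proof.
rewrite /chi; case: ifP => kS.
  rewrite (bigD1 k) //= [in RHS](bigD1 k) //= ffunE eqxx sgnR_neg mulNr.
  congr (- (_ * _)).
  by apply: eq_bigr => i /andP[_ ik]; rewrite ffunE (negbTE ik).
apply: eq_bigr => i iS; rewrite ffunE; case: eqP => // ik.
by subst i; rewrite kS in iS.
Qed.

Definition Dk (R : realType) n (f : cube n -> bool) (k : 'I_n) (x : cube n) : R :=
  (sgnR R (f x) - sgnR R (f (flip k x))) / 2.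

Lemma fh_D (R : realType) n (f : cube n -> bool) k S :
  fh (Dk R f k) S = if k \in S then fourier R f S else 0.
Proof.
rewrite /fh /fourier.
have -> : \sum_x Dk R f k x * chi R S x =
   (\sum_x sgnR R (f x) * chi R S x -
    \sum_x sgnR R (f (flip k x)) * chi R S x) / 2.
  rewrite -sumrB mulr_suml; apply: eq_bigr => x _; rewrite /Dk; ring.
rewrite [X in _ - X](reindex_inj (inv_inj (@flipK n k))) /=.
under [X in _ - X]eq_bigr do rewrite flipK chi_flip.
case: ifP => kS.
  under [X in _ - X]eq_bigr do rewrite mulrN.
  rewrite sumrN opprK -/(chi R S _); congr (_ / _).
  by rewrite /chi; field.
rewrite [X in X / 2](_ : _ = 0) ?mul0r //.
by apply/eqP; rewrite subr_eq0; apply/eqP; apply: eq_bigr.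
Qed.

Lemma infl_eq (R : realType) n (f : cube n -> bool) k :
  infl R f k = \sum_(S : {set 'I_n}) (if k \in S then fourier R f S ^+ 2 else 0).
Proof.
transitivity (\sum_(S : {set 'I_n}) fh (Dk R f k) S ^+ 2); last first.
  by apply: eq_bigr => S _; rewrite fh_D; case: ifP => //; rewrite expr0n.
rewrite parseval /infl; congr (_ / _).
rewrite -sumr_const big_mkcond /=; apply: eq_bigr => x _; rewrite inE /Dk.
case: (f x); case: (f (flip k x)); rewrite /sgnR /=; by field.
Qed.

Lemma fourier_sum1 (R : realType) n (f : cube n -> bool) :
  \sum_(S : {set 'I_n}) fourier R f S ^+ 2 = 1.
Proof.
have h2 : (2 ^+ n : R) != 0 by rewrite expf_neq0 // pnatr_eq0.
rewrite (parseval (fun x => sgnR R (f x))).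
rewrite (eq_bigr (fun=> 1)); last by move=> x _; case: (f x); rewrite /sgnR; lra.
rewrite sumr_const card_ffun card_bool card_ord natrX divff //.
Qed.

Lemma ln_prod (R : realType) (I : finType) (P : pred I) (a : I -> R) :
  (forall i, P i -> 0 < a i) ->
  ln (\prod_(i | P i) a i) = \sum_(i | P i) ln (a i).
Proof.
move=> ha.
have : 0 < \prod_(i | P i) a i /\ ln (\prod_(i | P i) a i) = \sum_(i | P i) ln (a i).
  apply: (big_ind2 (fun x y => 0 < x /\ ln x = y)).
  - by split; [exact: ltr01 | exact: ln1].
  - move=> x1 x2 y1 y2 [hx <-] [hy <-]; split; first exact: mulr_gt0.
    by rewrite lnM ?posrE.
  - by move=> i /ha hi; split.
by case.
Qed.

Lemma gibbs (R : realType) (p r Z : R) : 0 < p -> 0 < r -> 0 < Z ->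
  p * (- ln p) <= p * ln Z - p * ln r + (r / Z - p).
Proof.
move=> hp hr hZ.
have hx : 0 < r / (Z * p) by rewrite divr_gt0 // mulr_gt0.
have := @le_ln1Dx R (r / (Z * p) - 1).
rewrite (_ : 1 + (r / (Z * p) - 1) = r / (Z * p)); last by ring.
move=> /(_ ltac:(lra)).
rewrite ln_div ?posrE ?mulr_gt0 // lnM ?posrE // => h.
have := ler_wpM2l (ltW hp) h.
have -> : p * (r / (Z * p) - 1) = r / Z - p by field; rewrite ?gt_eqF.
move=> h2; lra.
Qed.

Lemma key (R : realType) n (p : {set 'I_n} -> R) (I : 'I_n -> R) :
  (forall S, 0 <= p S) -> \sum_(S : {set 'I_n}) p S = 1 ->
  (forall k, I k = \sum_(S : {set 'I_n}) (if k \in S then p S else 0)) ->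
  \sum_(S : {set 'I_n}) (if p S == 0 then 0 else p S * (- ln (p S))) <=
  \sum_(k < n) I k + \sum_(k < n) (if I k == 0 then 0 else I k * (- ln (I k))).
Proof.
move=> p0 p1 hI.
have pI : forall (k : 'I_n) (S : {set 'I_n}), k \in S -> p S <= I k.
  move=> k S kS; rewrite hI (bigD1 S) //= kS lerDl.
  by apply: sumr_ge0 => T _; case: ifP.
have I0 : forall k, 0 <= I k.
  by move=> k; rewrite hI; apply: sumr_ge0 => T _; case: ifP.
set Z := \prod_(k < n) (1 + I k).
have Zpos : 0 < Z by apply: prodr_gt0 => k _; have := I0 k; lra.
set r := fun S : {set 'I_n} => \prod_(k in S) I k.
have r0 : forall S, 0 <= r S by move=> S; apply: prodr_ge0.
have rZ : \sum_(S : {set 'I_n}) r S = Z.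
  rewrite /Z [RHS](eq_bigr (fun k => I k + 1)); last by move=> k _; rewrite addrC.
  rewrite bigA_distr; apply: eq_bigr => S _; rewrite /r big_mkcond //.
have lnZ : ln Z <= \sum_(k < n) I k.
  rewrite /Z ln_prod; last by move=> k _; have := I0 k; lra.
  apply: ler_sum => k _; apply: le_ln1Dx; have := I0 k; lra.
have pt : forall S, (if p S == 0 then 0 else p S * (- ln (p S))) <=
    p S * ln Z + \sum_(k < n) (if k \in S then (if I k == 0 then 0 else p S * (- ln (I k))) else 0)
    + (r S / Z - p S).
  move=> S; case: eqP => [->|/eqP pn].
    rewrite mul0r add0r subr0 big1 ?add0r; first by apply: divr_ge0 => //; exact: ltW.
    by move=> k _; case: ifP => //; case: ifP => //; rewrite mul0r.
  have pp : 0 < p S by rewrite lt_def pn p0.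
  have Ip : forall k, k \in S -> 0 < I k by move=> k kS; exact: lt_le_trans (pI k S kS).
  rewrite (eq_bigr (fun k => if k \in S then p S * (- ln (I k)) else 0)); last first.
    by move=> k _; case: ifP => // kS; rewrite gt_eqF ?Ip.
  rewrite -big_mkcond /= -mulr_sumr sumrN mulrN -ln_prod; last exact: Ip.
  have hr : 0 < r S by apply: prodr_gt0.
  by have := gibbs pp hr Zpos; rewrite /r; lra.
apply: le_trans (ler_sum _ (fun S _ => pt S)) _.
rewrite !big_split /= -mulr_suml p1 mul1r sumrN -mulr_suml rZ divff ?gt_eqF // p1 subrr addr0.
rewrite exchange_big /=; apply: lerD => //; apply: ler_sum => k _.
have [Ik0|In] := eqVneq (I k) 0.
  by rewrite big1 // => S _; case: ifP.
rewrite (eq_bigr (fun S : {set 'I_n} => (if k \in S then p S else 0) * - ln (I k))); last first.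
  by move=> S _; case: ifP => //; rewrite mul0r.
by rewrite -mulr_suml -hI.
Qed.

Theorem mainTheorem2 (R : realType) (n : nat) (hn : (1 <= n)%N)
    (f : cube n -> bool) :
  Ent R f <=
  (ln (2 : R))^-1 *
    (3 * total_infl R f +
     \sum_(k < n) (if infl R f k == 0 then 0
                   else infl R f k * ln (4 / infl R f k))).
Proof.
have -> : Ent R f = (ln (2 : R))^-1 *
    \sum_(S : {set 'I_n}) (if fourier R f S ^+ 2 == 0 then 0
        else fourier R f S ^+ 2 * (- ln (fourier R f S ^+ 2))).
  rewrite /Ent mulr_sumr; apply: eq_bigr => S _; rewrite sqrf_eq0.
  case: ifP => [_|/negbT h]; first by rewrite mulr0.
  rewrite /log2 div1r lnV ?posrE; first by rewrite mulrA mulrC.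
  by rewrite lt_def sqrf_eq0 h sqr_ge0.
have l2 : 0 <= (ln (2 : R))^-1 by rewrite invr_ge0 ln_ge0 // ler1n.
apply: ler_wpM2l => //.
apply: le_trans (key (p := fun S => fourier R f S ^+ 2) (I := infl R f) _ _ _) _.
- by move=> S; exact: sqr_ge0.
- exact: fourier_sum1.
- by move=> k; rewrite infl_eq.
have I0 : forall k, 0 <= infl R f k.
  by move=> k; rewrite /infl divr_ge0 // exprn_ge0.
have T0 : 0 <= total_infl R f by rewrite /total_infl sumr_ge0.
rewrite /total_infl in T0 *; apply: lerD; first lra.
apply: ler_sum => k _; case: ifP => // /negbT In.
have Ip : 0 < infl R f k by rewrite lt_def In I0.
have h4 : 0 <= infl R f k * ln 4 by rewrite mulr_ge0 // ln_ge0 // ler1n.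
rewrite (@ln_div R 4 (infl R f k)) ?posrE //; lra.
Qed.
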